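(* Let $G=(\pi,R)$ be a monogamy-of-entanglement game with $X=\{0,1\}$, $\pi$ uniform on $X$, and each $R(a|x)$ an orthogonal projection. Let $c(G)=\max_{a,b\in A}\big\|\sqrt{R(a|0)}\sqrt{R(b|1)}\big\|^2$. Then for every positive integer $n$, $\omega^\ast(G^n)\ \ge\ \omega(G^n)\ \ge\ \left(\frac12+\frac12\sqrt{c(G)}\right)^n.$
   Context: A monogamy-of-entanglement game $G=(\pi,R)$ consists of a finite nonempty question set $X$, a probability distribution $\pi$ on $X$, a finite nonempty answer set $A$, a positive integer $m$, and positive semidefinite $m\times m$ matrices $R(a|x)$ with $\sum_{a\in A}R(a|x)=\mathbb{1}$ for each $x\in X$. The quantum value $\omega^\ast(G)$ is the supremum, over finite-dimensional Hilbert spaces $\mathcal{A},\mathcal{B}$, density operators $\rho$ on $\mathbb{C}^m\otimes\mathcal{A}\otimes\mathcal{B}$, and POVMs $\{A^x_a:a\in A\}$ on $\mathcal{A}$, $\{B^x_a:a\in A\}$ on $\mathcal{B}$ (one for each $x$), of $\sum_x\pi(x)\sum_a\mathrm{Tr}((R(a|x)\otimes A^x_a\otimes B^x_a)\rho)$. The unentangled value $\omega(G)$ is the same supremum over fully separable $\rho$, equivalently $\omega(G)=\max_{f:X\to A}\|\sum_x\pi(x)R(f(x)|x)\|$ (operator norm). The $n$-fold parallel repetition $G^n$ is the monogamy-of-entanglement game with question set $X^n$, distribution $\pi^n(x_1,\dots,x_n)=\prod_i\pi(x_i)$, answer set $A^n$, referee space $(\mathbb{C}^m)^{\otimes n}$,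 and measurement operators $R(a_1\cdots a_n|x_1\cdots x_n)=R(a_1|x_1)\otimes\cdots\otimes R(a_n|x_n)$. *)

(* Defs.v *)
(* Complex scalars: an arbitrary numClosedFieldType C
   (algebraically closed field with conjugation and partial order, e.g. algC). *)
From HB Require Import structures.
From mathcomp Require Import all_boot all_order all_algebra.
Set Implicit Arguments. Unset Strict Implicit. Unset Printing Implicit Defensive.
Import Order.TTheory GRing.Theory Num.Theory.
Local Open Scope ring_scope.

Section Defs.
Variable C : numClosedFieldType.

Definition adj (p q : nat) (M : 'M[C]_(p, q)) : 'M[C]_(q, p) := (map_mx Num.conj M)^T.

Definition hermitian (d : nat) (M : 'M[C]_d) : Prop := adj M = M.

Definition psd (d : nat) (M : 'M[C]_d) : Prop :=
  hermitian M /\ forall v : 'cV[C]_d, 0 <= (adj v *m M *m v) 0 0.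

Definition orth_proj (d : nat) (M : 'M[C]_d) : Prop := hermitian M /\ M *m M = M.

Definition density (d : nat) (rho : 'M[C]_d) : Prop := psd rho /\ \tr rho = 1.

Definition povm (A : finType) (d : nat) (P : A -> 'M[C]_d) : Prop :=
  (forall a, psd (P a)) /\ \sum_(a : A) P a = 1%:M.

Definition vnorm (d : nat) (v : 'cV[C]_d) : C := sqrtC ((adj v *m v) 0 0).

Definition is_lub (S : C -> Prop) (r : C) : Prop :=
  (forall s, S s -> s <= r) /\ (forall y, y < r -> exists s, S s /\ y < s).

(* sup S <= sup T  (no existence of the suprema needed) *)
Definition sup_le (S T : C -> Prop) : Prop :=
  forall s, S s -> forall y, y < s -> exists t, T t /\ y < t.

Definition le_sup (x : C) (T : C -> Prop) : Prop :=
  forall y, y < x -> exists t, T t /\ y < t.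

Definition is_opnorm (p q : nat) (M : 'M[C]_(p, q)) (r : C) : Prop :=
  is_lub (fun s => exists v : 'cV[C]_q, v != 0 /\ s = vnorm (M *m v) / vnorm v) r.

(* Kronecker product, indexed by the enumeration of the product index type *)
Definition kron (p q : nat) (P : 'M[C]_p) (Q : 'M[C]_q) : 'M[C]_(#|{: 'I_p * 'I_q}|) :=
  \matrix_(i, j) (P (enum_val i).1 (enum_val j).1 * Q (enum_val i).2 (enum_val j).2).

(* monogamy-of-entanglement game G = (pi, R): questions X, answers A, referee C^M *)
Definition moe_game (X A : finType) (M : nat) (pi : X -> C) (R : A -> X -> 'M[C]_M) : Prop :=
  [/\ (0 < #|X|)%N, (0 < #|A|)%N, (0 < M)%N,
      (forall x, 0 <= pi x) /\ \sum_(x : X) pi x = 1 &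
      forall x, povm (fun a => R a x)].

Definition strat_value (X A : finType) (M : nat) (pi : X -> C) (R : A -> X -> 'M[C]_M)
    (dA dB : nat) (rho : 'M[C]_(#|{: 'I_(#|{: 'I_M * 'I_dA}|) * 'I_dB}|))
    (PA : X -> A -> 'M[C]_dA) (PB : X -> A -> 'M[C]_dB) : C :=
  \sum_(x : X) pi x * \sum_(a : A) \tr (kron (kron (R a x) (PA x a)) (PB x a) *m rho).

(* the set of values achieved by quantum strategies; omega^* is its supremum *)
Definition qvalues (X A : finType) (M : nat) (pi : X -> C) (R : A -> X -> 'M[C]_M)
    : C -> Prop :=
  fun s => exists (dA dB : nat) rho PA PB,
    [/\ density rho, forall x, povm (PA x), forall x, povm (PB x) &
        s = @strat_value X A M pi R dA dB rho PA PB].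

(* omega(G) = max_f || sum_x pi x R(f x | x) ||, as the supremum of this set *)
Definition uvalues (X A : finType) (M : nat) (pi : X -> C) (R : A -> X -> 'M[C]_M)
    : C -> Prop :=
  fun s => exists f : X -> A, is_opnorm (\sum_(x : X) pi x *: R (f x) x) s.

Definition rep_pi (X : finType) (pi : X -> C) (n : nat) : {ffun 'I_n -> X} -> C :=
  fun x => \prod_(i < n) pi (x i).

Definition rep_R (X A : finType) (M : nat) (R : A -> X -> 'M[C]_M) (n : nat)
    : {ffun 'I_n -> A} -> {ffun 'I_n -> X} -> 'M[C]_(#|{: {ffun 'I_n -> 'I_M}}|) :=
  fun a x => \matrix_(i, j)
    let ii : {ffun 'I_n -> 'I_M} := enum_val i in
    let jj : {ffun 'I_n -> 'I_M} := enum_val j in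
    \prod_(k < n) R (a k) (x k) (ii k) (jj k).

(* c(G) = max_{a,b} || sqrt R(a|0) sqrt R(b|1) ||^2 ; for orthogonal projections
   sqrt R = R *)
Definition is_cG (A : finType) (M : nat) (R : A -> 'I_2 -> 'M[C]_M) (c : C) : Prop :=
  is_lub (fun s => exists a b r, is_opnorm (R a ord0 *m R b ord_max) r /\ s = r ^+ 2) c.

End Defs.

Arguments rep_pi {C X} pi n.
Arguments rep_R {C X A M} R n.

(* Main.v *)
Require Import Defs.
From HB Require Import structures.
From mathcomp Require Import all_boot all_order all_algebra.
From mathcomp Require Import ring.
Import Order.TTheory GRing.Theory Num.Theory.
Local Open Scope ring_scope.

Set Implicit Arguments. Unset Strict Implicit. Unset Printing Implicit Defensive.

Lemma hadj_mul {C : numClosedFieldType} p q r (A : 'M[C]_(p,q)) (B : 'M[C]_(q,r)) :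
  adj (A *m B) = adj B *m adj A.
Proof. by rewrite /adj map_mxM trmx_mul. Qed.

Lemma hadjK {C : numClosedFieldType} p q (A : 'M[C]_(p,q)) : adj (adj A) = A.
Proof. by apply/matrixP => i j; rewrite !mxE conjCK. Qed.

Lemma hadjD {C : numClosedFieldType} p q (A B : 'M[C]_(p,q)) : adj (A + B) = adj A + adj B.
Proof. by apply/matrixP => i j; rewrite !mxE rmorphD. Qed.

Lemma hadjZ {C : numClosedFieldType} p q (a : C) (A : 'M[C]_(p,q)) : adj (a *: A) = a^* *: adj A.
Proof. by apply/matrixP => i j; rewrite !mxE rmorphM. Qed.

Lemma hadjE {C : numClosedFieldType} p q (A : 'M[C]_(p,q)) i j : adj A i j = (A j i)^*.
Proof. by rewrite !mxE. Qed.

Definition quad {C : numClosedFieldType} q (v : 'cV[C]_q) : C := (adj v *m v) 0 0.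

Lemma quadE {C : numClosedFieldType} q (v : 'cV[C]_q) : quad v = \sum_i v i 0 * (v i 0)^*.
Proof. by rewrite /quad /adj mxE; apply: eq_bigr => i _; rewrite !mxE mulrC. Qed.

Lemma quad_ge0 {C : numClosedFieldType} q (v : 'cV[C]_q) : 0 <= quad v.
Proof. by rewrite quadE; apply: sumr_ge0 => i _; apply: mul_conjC_ge0. Qed.

Lemma quad_eq0 {C : numClosedFieldType} q (v : 'cV[C]_q) : (quad v == 0) = (v == 0).
Proof.
apply/idP/idP; last first.
  by move/eqP->; rewrite quadE big1 // => i _; rewrite mxE mul0r.
rewrite quadE => /eqP H; apply/eqP/matrixP => i j; rewrite ord1 mxE.
have /(_ i isT) := psumr_eq0P (fun i _ => mul_conjC_ge0 (v i 0)) H.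
by move/eqP; rewrite mul_conjC_eq0 => /eqP.
Qed.

Lemma quad_gt0 {C : numClosedFieldType} q (v : 'cV[C]_q) : v != 0 -> 0 < quad v.
Proof. by move=> nz; rewrite lt_def quad_eq0 nz quad_ge0. Qed.

Lemma quadZ {C : numClosedFieldType} q (a : C) (v : 'cV[C]_q) : quad (a *: v) = a * a^* * quad v.
Proof. by rewrite /quad hadjZ -scalemxAl -scalemxAr !mxE mulrA (mulrC a^*). Qed.

Lemma quadM {C : numClosedFieldType} p q (B : 'M[C]_(p,q)) v :
  quad (B *m v) = (adj v *m (adj B *m B) *m v) 0 0.
Proof. by rewrite /quad hadj_mul !mulmxA. Qed.

Lemma vnormE {C : numClosedFieldType} q (v : 'cV[C]_q) : vnorm v = sqrtC (quad v).
Proof. by []. Qed.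


Lemma fin_max_rel {C : numClosedFieldType} (I : finType) (P : I -> C -> Prop) (i0 : I) :
  (forall i, exists x, x \is Num.real /\ P i x) ->
  exists j m, [/\ P j m, m \is Num.real & forall i, exists x, P i x /\ x <= m].
Proof.
move=> HP.
suff H : forall s : seq I, exists j m,
   [/\ P j m, m \is Num.real & forall i, i \in s -> exists x, P i x /\ x <= m].
  have [j [m [Pm rm Hs]]] := H (enum I).
  by exists j, m; split => // i; apply: Hs; rewrite mem_enum.
elim=> [|i s [j [m [Pm rm Hs]]]].
  by have [x [rx Px]] := HP i0; exists i0, x; split.
have [x [rx Px]] := HP i.
have /orP [xm|mx] := real_leVge rx rm.
  exists j, m; split => // i'; rewrite in_cons => /orP [/eqP->|/Hs //].
  by exists x.
exists i, x; split => // i'; rewrite in_cons => /orP [/eqP->|/Hs [y [Py ym]]].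
  by exists x.
by exists y; split => //; apply: le_trans mx.
Qed.

Lemma herm_hermsym {C : numClosedFieldType} q (K : 'M[C]_q) :
  Defs.hermitian K -> K \is hermsymmx.
Proof.
move=> HK; apply/is_hermitianmxP; rewrite expr0 scale1r -map_trmx.
by rewrite -[LHS]HK.
Qed.

Lemma adj_tc {C : numClosedFieldType} p q (U : 'M[C]_(p,q)) : adj U = (U ^t* )%sesqui.
Proof. by rewrite /adj map_trmx. Qed.

Lemma herm_max {C : numClosedFieldType} q (K : 'M[C]_q) : Defs.hermitian K -> (0 < q)%N ->
  exists mu (v : 'cV[C]_q), [/\ mu \is Num.real, v != 0, K *m v = mu *: v &
     forall z : 'cV[C]_q, (adj z *m K *m z) 0 0 <= mu * quad z].
Proof.
move=> HK q0.
have Hs := herm_hermsym HK.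
have /orthomx_spectralP KE := hermitian_normalmx Hs.
have dr := hermitian_spectral_diag_real Hs.
set U := spectralmx K in KE; set d := spectral_diag K in KE dr.
have Uu : U \is unitarymx by exact: spectral_unitarymx.
have Uunit : U \in unitmx by exact: spectral_unit.
have UUa : U *m adj U = 1%:M by rewrite adj_tc; apply/unitarymxP.
have UaU : adj U *m U = 1%:M by rewrite adj_tc -invmx_unitary // mulVmx.
have KE' : K = adj U *m diag_mx d *m U by rewrite adj_tc -invmx_unitary.
have [i0 [m [-> rm Hm]]] := @fin_max_rel C _ (fun i x => x = d 0 i) (Ordinal q0)
   (fun i => ex_intro _ (d 0 i) (conj (mxOverP dr 0 i) erefl)).
set e : 'cV[C]_q := delta_mx i0 0.
exists (d 0 i0), (adj U *m e); split => //.
- apply/eqP => H0.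
  have : U *m (adj U *m e) = e by rewrite mulmxA UUa mul1mx.
  rewrite H0 mulmx0 => /matrixP /(_ i0 0); rewrite !mxE !eqxx /=.
  by move/eqP; rewrite eq_sym oner_eq0.
- rewrite KE' -!mulmxA (mulmxA U) UUa mul1mx mul_diag_mx.
  rewrite scalemxAr; congr (_ *m _); apply/matrixP => i j.
  rewrite !mxE; have [->|ne] := eqVneq i i0; first by [].
  by rewrite !mulr0.
- move=> z; set w := U *m z.
  have -> : (adj z *m K *m z) 0 0 = (adj w *m (diag_mx d *m w)) 0 0.
    by rewrite KE' /w hadj_mul !mulmxA.
  have -> : quad z = quad w by rewrite /w /quad hadj_mul !mulmxA -(mulmxA _ _ U) UaU mulmx1.
  rewrite quadE mxE mulr_sumr; apply: ler_sum => i _.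
  rewrite mul_diag_mx !mxE; set x := (\sum_j _ * _); rewrite mulrCA (mulrC x^*); apply: ler_wpM2r.
    by rewrite mul_conjC_ge0.
  by have [y [-> ]] := Hm i.
Qed.


Lemma quad_eig {C : numClosedFieldType} p q (B : 'M[C]_(p,q)) v mu :
  (adj B *m B) *m v = mu *: v -> quad (B *m v) = mu * quad v.
Proof. by move=> E; rewrite quadM -mulmxA E -scalemxAr mxE. Qed.

Lemma herm_adjB {C : numClosedFieldType} p q (B : 'M[C]_(p,q)) :
  Defs.hermitian (adj B *m B).
Proof. by rewrite /Defs.hermitian hadj_mul hadjK. Qed.

Lemma sqrtC_quad_mul {C : numClosedFieldType} (mu x : C) : 0 <= mu -> 0 <= x ->
  sqrtC (mu * x) = sqrtC mu * sqrtC x.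
Proof. by move=> h1 h2; rewrite sqrtCM // nnegrE. Qed.

Lemma opnorm_of {C : numClosedFieldType} p q (B : 'M[C]_(p,q)) : (0 < q)%N ->
  exists mu, [/\ 0 <= mu, is_opnorm B (sqrtC mu),
     (forall z, quad (B *m z) <= mu * quad z) &
     exists v : 'cV[C]_q, v != 0 /\ (adj B *m B) *m v = mu *: v].
Proof.
move=> q0; have [mu [v [rmu nz E Hb]]] := herm_max (herm_adjB B) q0.
have Hb' : forall z, quad (B *m z) <= mu * quad z by move=> z; rewrite quadM.
have qv := quad_gt0 nz.
have mu0 : 0 <= mu.
  by rewrite -(pmulr_lge0 _ qv) -(quad_eig E) quad_ge0.
exists mu; split => //; last by exists v.
split.
- move=> s [z [zn ->]]; rewrite !vnormE.
  have qz := quad_gt0 zn.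
  rewrite ler_pdivrMr ?sqrtC_gt0 // -sqrtC_quad_mul // ?(ltW qz) //.
  by rewrite ler_sqrtC ?nnegrE ?quad_ge0 ?mulr_ge0 // ltW.
- move=> y ly; exists (sqrtC mu); split => //.
  exists v; split => //; rewrite !vnormE (quad_eig E) sqrtC_quad_mul // ?(ltW qv) //.
  by rewrite mulfK // sqrtC_eq0 gt_eqF.
Qed.


Lemma sum_pair1 {C : numClosedFieldType} (T : finType) (F : T -> C) :
  \sum_(i < #|{: T * 'I_1}|) F (enum_val i).1 = \sum_t F t.
Proof.
rewrite -(big_enum_val (fun p : T * 'I_1 => F p.1)) /=.
rewrite -(pair_big predT predT (fun a (b : 'I_1) => F a)) /=.
by apply: eq_bigr => t _; rewrite big_ord1.
Qed.

Lemma sum_g {C : numClosedFieldType} M (F : 'I_M -> C) :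
  \sum_(i < #|{: 'I_#|{: 'I_M * 'I_1}| * 'I_1}|) F (enum_val (enum_val i).1).1 = \sum_m F m.
Proof.
by rewrite (sum_pair1 (fun j : 'I_#|{: 'I_M * 'I_1}| => F (enum_val j).1)) sum_pair1.
Qed.

Lemma bilinE {C : numClosedFieldType} M (u : 'cV[C]_M) (K : 'M[C]_M) :
  (adj u *m K *m u) 0 0 = \sum_m \sum_m' (u m 0)^* * K m m' * u m' 0.
Proof.
rewrite mxE [RHS]exchange_big /=; apply: eq_bigr => m' _.
rewrite mxE mulr_suml; apply: eq_bigr => m _.
by rewrite /adj !mxE.
Qed.


Lemma povm_delta {C : numClosedFieldType} (A : finType) (a0 : A) :
  povm (fun a => (((a == a0)%:R : C)%:M : 'M[C]_1)).
Proof.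
split.
- move=> a; split.
    by apply/matrixP => i j; rewrite /adj !mxE !ord1 eqxx !mulr1n conjC_nat.
  by move=> v; rewrite mul_mx_scalar -scalemxAl mxE mulr_ge0 ?ler0n ?quad_ge0.
- apply/matrixP => i j; rewrite summxE !mxE (bigD1 a0) //= !mxE eqxx big1 ?addr0 //.
  by move=> a /negbTE na; rewrite !mxE na mul0rn.
Qed.

Lemma strat_exists {C : numClosedFieldType} (X A : finType) M (pi : X -> C)
    (R : A -> X -> 'M[C]_M) (f : X -> A) (u : 'cV[C]_M) : u != 0 ->
  qvalues pi R ((adj u *m (\sum_x pi x *: R (f x) x) *m u) 0 0 / quad u).
Proof.
move=> nz; have qu := quad_gt0 nz.
set N2 := #|{: 'I_#|{: 'I_M * 'I_1}| * 'I_1}|.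
pose g (i : 'I_N2) : 'I_M := (enum_val (enum_val i).1).1.
pose W : 'cV[C]_N2 := \col_i u (g i) 0.
pose r := (quad u)^-1.
have r0 : 0 <= r by rewrite invr_ge0 ltW.
pose rho := r *: (W *m adj W).
pose PA := fun (x : X) (a : A) => (((a == f x)%:R : C)%:M : 'M[C]_1).
exists 1%N, 1%N, rho, PA, PA; split.
- split; last first.
    rewrite /rho mxtraceZ /mxtrace.
    under eq_bigr do rewrite mxE big_ord1 /adj !mxE.
    rewrite (sum_g (fun m => u m 0 * (u m 0)^*)) -quadE /r mulVf //.
    by rewrite gt_eqF.
  split.
    by rewrite /Defs.hermitian /rho hadjZ hadj_mul hadjK geC0_conj.
  move=> v; rewrite /rho -scalemxAr -scalemxAl mxE mulr_ge0 //.
  by rewrite -{1}(hadjK W) -quadM quad_ge0.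
- by move=> x; apply: povm_delta.
- by move=> x; apply: povm_delta.
have trE : forall (Rm : 'M[C]_M) (c : C),
    \tr (kron (kron Rm (c%:M : 'M_1)) (c%:M : 'M_1) *m rho) = c * c * r * (adj u *m Rm *m u) 0 0.
  move=> Rm c; rewrite bilinE /mxtrace.
  transitivity (\sum_(i < N2) \sum_(j < N2)
     (fun m m' => c * c * r * ((u m 0)^* * Rm m m' * u m' 0)) (g i) (g j)).
    apply: eq_bigr => i _; rewrite mxE; apply: eq_bigr => j _.
    have E1 : forall x y : 'I_1, (x == y) = true by move=> x y; rewrite (ord1 x) (ord1 y).
    rewrite /kron /rho. do 5 rewrite mxE. rewrite !E1 !mulr1n. rewrite mxE big_ord1 /adj /W !mxE. rewrite /g. ring.
  rewrite (eq_bigr (fun i => \sum_m' c * c * r * ((u (g i) 0)^* * Rm (g i) m' * u m' 0))); last first.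
    move=> i _; exact: (sum_g (fun m' => c * c * r * ((u (g i) 0)^* * Rm (g i) m' * u m' 0))).
  rewrite (sum_g (fun m => \sum_m' c * c * r * ((u m 0)^* * Rm m m' * u m' 0))).
  by rewrite mulr_sumr; apply: eq_bigr => m _; rewrite mulr_sumr.
rewrite /strat_value.
have lin : (adj u *m (\sum_x pi x *: R (f x) x) *m u) 0 0 =
    \sum_x pi x * (adj u *m R (f x) x *m u) 0 0.
  rewrite mulmx_sumr mulmx_suml summxE; apply: eq_bigr => x _.
  by rewrite -scalemxAr -scalemxAl mxE.
rewrite lin mulr_suml; apply: eq_bigr => x _.
rewrite (bigD1 (f x)) //= trE eqxx big1 ?addr0; last first.
  by move=> a /negbTE na; rewrite trE na !mul0r.
by rewrite /r mulr1 mul1r; ring.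
Qed.


Lemma psd_eig {C : numClosedFieldType} q (K : 'M[C]_q) (mu : C) (v : 'cV[C]_q) :
  psd K -> 0 <= mu -> v != 0 -> adj K *m K *m v = mu *: v ->
  exists w : 'cV[C]_q, w != 0 /\ sqrtC mu * quad w <= (adj w *m K *m w) 0 0.
Proof.
move=> [HK Hpos] mu0 nz E; rewrite HK in E.
set s := sqrtC mu.
have ss : s * s = mu by rewrite -expr2 sqrtCK.
have s0 : 0 <= s by rewrite sqrtC_ge0.
set w := K *m v + s *: v.
have [w0|wn] := eqVneq w 0.
  exists v; split => //.
  have Kv : K *m v = - (s *: v) by apply/eqP; rewrite -addr_eq0; apply/eqP.
  have := Hpos v; rewrite -mulmxA Kv -scaleNr -scalemxAr mxE mulNr.
  move=> h; have h2 : s * quad v <= 0 by rewrite -oppr_ge0.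
  exact: le_trans h2 h.
exists w; split => //.
have Kw : K *m w = s *: w.
  rewrite /w mulmxDr mulmxA E -scalemxAr scalerDr scalerA ss addrC.
  done.
by rewrite -mulmxA Kw -scalemxAr mxE.
Qed.

Lemma cV_pos {C : numClosedFieldType} n (z : 'cV[C]_n) : z != 0 -> (0 < n)%N.
Proof. by case: n z => [|//] z; rewrite (flatmx0 z) eqxx. Qed.

Lemma sup_le_gen {C : numClosedFieldType} (X A : finType) M (pi : X -> C)
    (R : A -> X -> 'M[C]_M) :
  (forall f : X -> A, psd (\sum_x pi x *: R (f x) x)) -> sup_le (uvalues pi R) (qvalues pi R).
Proof.
move=> Hpsd s [f [Hub Hlub]] y ys.
have [s' [[z [zn ->]] ys']] := Hlub y ys.
have M0 : (0 < M)%N by apply: (cV_pos zn).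
set K := \sum_x pi x *: R (f x) x.
have [mu [mu0 [opn1 _] bd [v [vn E]]]] := opnorm_of K M0.
have hs := opn1 _ (ex_intro _ z (conj zn erefl)).
have [w [wn Hw]] := psd_eig (Hpsd f) mu0 vn E.
exists ((adj w *m K *m w) 0 0 / quad w); split; first exact: strat_exists.
apply: (lt_le_trans ys'); apply: (le_trans hs).
by rewrite ler_pdivlMr // quad_gt0.
Qed.


Lemma psd_sum {C : numClosedFieldType} (X : finType) q (w : X -> C) (P : X -> 'M[C]_q) :
  (forall x, 0 <= w x) -> (forall x, psd (P x)) -> psd (\sum_x w x *: P x).
Proof.
move=> w0 HP; split.
  apply/matrixP => i j; rewrite /adj !mxE !summxE rmorph_sum; apply: eq_bigr => x _.
  have [HPx _] := HP x; have E := congr1 (fun M : 'M[C]_q => M i j) (HPx : adj (P x) = P x); rewrite /adj !mxE in E.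
  by rewrite !mxE rmorphM /= geC0_conj // E.
move=> v; rewrite mulmx_sumr mulmx_suml summxE; apply: sumr_ge0 => x _.
rewrite -scalemxAr -scalemxAl mxE; apply: mulr_ge0 => //.
by have [_ ->] := HP x.
Qed.

Lemma proj_psd {C : numClosedFieldType} q (P : 'M[C]_q) : orth_proj P -> psd P.
Proof.
move=> [HP PP]; split => // v.
by rewrite -{1}PP -{1}HP -quadM quad_ge0.
Qed.

Lemma my_sum_enum {C : numClosedFieldType} (T : finType) (F : T -> C) :
  \sum_(i < #|{: T}|) F (enum_val i) = \sum_t F t.
Proof. by rewrite -big_enum_val. Qed.

Lemma herm_entry {C : numClosedFieldType} q (P : 'M[C]_q) i j :
  Defs.hermitian P -> (P j i)^* = P i j.
Proof.
move=> H; have E := congr1 (fun M : 'M[C]_q => M i j) (H : adj P = P).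
by rewrite /adj !mxE in E.
Qed.

Lemma rep_R_proj {C : numClosedFieldType} (X A : finType) M (R : A -> X -> 'M[C]_M) n a x :
  (forall a x, orth_proj (R a x)) -> orth_proj (rep_R R n a x).
Proof.
move=> HR; split.
  apply/matrixP => i j; rewrite /adj /rep_R !mxE /= rmorph_prod; apply: eq_bigr => k _.
  by have [H _] := HR (a k) (x k); apply: herm_entry.
apply/matrixP => i l; rewrite /rep_R !mxE /=.
under eq_bigr do rewrite !mxE /=.
under eq_bigr do rewrite -big_split /=.
rewrite (my_sum_enum (fun t : {ffun 'I_n -> 'I_M} => \prod_(k < n)
   (R (a k) (x k) (enum_val i k) (t k) * R (a k) (x k) (t k) (enum_val l k)))).
rewrite -(bigA_distr_bigA (fun k m => R (a k) (x k) (enum_val i k) m * R (a k) (x k) m (enum_val l k))) /=.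
apply: eq_bigr => k _.
have [_ PP] := HR (a k) (x k).
by rewrite -{3}PP mxE.
Qed.


Lemma Kf_entry {C : numClosedFieldType} (X A : finType) M (pi : X -> C) (R : A -> X -> 'M[C]_M)
   n (g : X -> A) i j :
  (\sum_x rep_pi pi n x *: rep_R R n [ffun k => g (x k)] x) i j =
  \prod_k (\sum_t pi t *: R (g t) t) (enum_val i k) (enum_val j k).
Proof.
rewrite summxE (eq_bigr (fun x : {ffun 'I_n -> X} => \prod_k (pi (x k) * R (g (x k)) (x k) (enum_val i k) (enum_val j k)))); last first.
  move=> x _; rewrite mxE /rep_pi /rep_R mxE /= -big_split /=.
  by apply: eq_bigr => k _; rewrite ffunE.
under [RHS]eq_bigr do rewrite summxE.
rewrite bigA_distr_bigA /=; apply: eq_bigr => x _; apply: eq_bigr => k _.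
by rewrite mxE.
Qed.

Lemma Kf_eig {C : numClosedFieldType} (X A : finType) M (pi : X -> C) (R : A -> X -> 'M[C]_M)
   n (g : X -> A) (u : 'cV[C]_M) (lam : C) :
  (\sum_t pi t *: R (g t) t) *m u = lam *: u ->
  let w : 'cV[C]_(#|{: {ffun 'I_n -> 'I_M}}|) := \col_i \prod_(k < n) u ((enum_val i : {ffun 'I_n -> 'I_M}) k) 0 in
  (\sum_x rep_pi pi n x *: rep_R R n [ffun k => g (x k)] x) *m w = lam ^+ n *: w.
Proof.
move=> E w; set T := \sum_t pi t *: R (g t) t in E.
apply/matrixP => i j; rewrite ord1 !mxE.
rewrite (eq_bigr (fun l : 'I_#|{: {ffun 'I_n -> 'I_M}}| => \prod_k (T ((enum_val i : {ffun 'I_n -> 'I_M}) k) ((enum_val l : {ffun 'I_n -> 'I_M}) k) * u ((enum_val l : {ffun 'I_n -> 'I_M}) k) 0))); last first.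
  by move=> l _; rewrite Kf_entry /w mxE big_split.
rewrite (my_sum_enum (fun t : {ffun 'I_n -> 'I_M} => \prod_k (T ((enum_val i : {ffun 'I_n -> 'I_M}) k) (t k) * u (t k) 0))).
rewrite -(bigA_distr_bigA (fun k m => T ((enum_val i : {ffun 'I_n -> 'I_M}) k) m * u m 0)) /=.
have -> : lam ^+ n = \prod_(k < n) lam by rewrite prodr_const card_ord.
rewrite -big_split /=.
apply: eq_bigr => k _.
have := congr1 (fun N : 'cV[C]_M => N ((enum_val i : {ffun 'I_n -> 'I_M}) k) 0) E; rewrite !mxE => <-.
by [].
Qed.

Lemma w_nz {C : numClosedFieldType} M n (u : 'cV[C]_M) : u != 0 ->
  (\col_i \prod_(k < n) u ((enum_val i : {ffun 'I_n -> 'I_M}) k) 0 : 'cV[C]_(#|{: {ffun 'I_n -> 'I_M}}|)) != 0.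
Proof.
move=> nz.
have [m0 hm0] : exists m0, u m0 0 != 0.
  case: (pickP (fun m => u m 0 != 0)) => [m0 hm0|H]; first by exists m0.
  case/negP: nz; apply/eqP/matrixP => m j; rewrite ord1 mxE.
  by move: (H m) => /= /negbFE /eqP.
apply/eqP => /matrixP /(_ (enum_rank [ffun _ : 'I_n => m0]) 0); rewrite !mxE enum_rankK.
under eq_bigr do rewrite ffunE.
rewrite prodr_const card_ord => /eqP; rewrite expf_eq0 (negbTE hm0) andbF //.
Qed.


Lemma lub_unique {C : numClosedFieldType} (S : C -> Prop) r1 r2 :
  is_lub S r1 -> is_lub S r2 -> r1 \is Num.real -> r2 \is Num.real -> r1 = r2.
Proof.
move=> L1 L2 h1 h2.
have a : forall x y, is_lub S x -> is_lub S y -> x \is Num.real -> y \is Num.real -> x <= y.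
  move=> x y [ux lx] [uy ly] hx hy; rewrite real_leNgt //; apply/negP => yx.
  have [s [Ss ys]] := lx y yx.
  by have := uy s Ss; move/(lt_le_trans ys); rewrite ltxx.
by apply/eqP; rewrite eq_le !a.
Qed.

Lemma opnorm_ge0 {C : numClosedFieldType} p q (B : 'M[C]_(p,q)) r :
  (0 < q)%N -> is_opnorm B r -> 0 <= r.
Proof.
move=> q0 [ub _].
have zn : (const_mx 1 : 'cV[C]_q) != 0.
  apply/eqP => /matrixP /(_ (Ordinal q0) 0); rewrite !mxE => /eqP; by rewrite oner_eq0.
apply: le_trans (ub _ (ex_intro _ _ (conj zn erefl))).
by rewrite divr_ge0 // sqrtC_ge0 quad_ge0.
Qed.

Lemma proj_eig_pos {C : numClosedFieldType} q (P Q : 'M[C]_q) (v : 'cV[C]_q) m :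
  orth_proj P -> orth_proj Q -> v != 0 -> 0 < m ->
  adj (P *m Q) *m (P *m Q) *m v = m *: v ->
  exists w : 'cV[C]_q, w != 0 /\ (P + Q) *m w = (1 + sqrtC m) *: w.
Proof.
move=> [HP PP] [HQ QQ] vn m0 E.
rewrite hadj_mul HP HQ -!mulmxA (mulmxA P P) PP in E.
set s := sqrtC m.
have s0 : 0 < s by rewrite sqrtC_gt0.
have ss : s * s = m by rewrite -expr2 sqrtCK.
have Qv : Q *m v = v.
  apply: (scalerI (negbT (gt_eqF m0))); rewrite scalemxAr -E !mulmxA QQ.
  by rewrite -!mulmxA.
have QPv : Q *m (P *m v) = m *: v by rewrite -{1}Qv -E !mulmxA.
set w := s *: v + P *m v.
have wn : w != 0.
  apply/eqP => w0.
  have Pv : P *m v = - (s *: v).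
    by apply/eqP; rewrite -addr_eq0 addrC; apply/eqP; rewrite -/w w0.
  have : Q *m (P *m v) = - (s *: v) by rewrite Pv -scaleNr -scalemxAr Qv scaleNr.
  rewrite QPv => /eqP; rewrite -subr_eq0 opprK -scalerDl scaler_eq0 (negbTE vn) orbF.
  by rewrite -ss gt_eqF // addr_gt0 // mulr_gt0.
exists w; split => //.
rewrite /w mulmxDl !mulmxDr -!scalemxAr QPv !mulmxA PP Qv.
set x := P *m v.
rewrite scalerDr scalerA mulrDl mul1r ss scalerDl scalerDl scale1r.
by rewrite [LHS]addrC [x + _]addrC.
Qed.

Lemma col_nz {C : numClosedFieldType} p q (P : 'M[C]_(p,q)) :
  P != 0 -> exists j : 'I_q, P *m delta_mx j (0 : 'I_1) != 0.
Proof.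
move=> Pn; case: (pickP (fun j => P *m delta_mx j (0 : 'I_1) != 0)) => [j hj|H]; first by exists j.
case/negP: Pn; apply/eqP/matrixP => i j; rewrite mxE.
have := H j; rewrite /= -colE => /negbFE /eqP /matrixP /(_ i 0).
by rewrite !mxE.
Qed.

Lemma proj_eig_zero {C : numClosedFieldType} q (P Q : 'M[C]_q) :
  orth_proj P -> orth_proj Q -> P != 0 -> P *m Q = 0 ->
  exists w : 'cV[C]_q, w != 0 /\ (P + Q) *m w = (1 + sqrtC 0) *: w.
Proof.
move=> [HP PP] [HQ QQ] Pn PQ.
have QP : Q *m P = 0.
  have := congr1 (@adj C q q) PQ; rewrite hadj_mul HP HQ => ->.
  by apply/matrixP => i j; rewrite /adj !mxE conjC0.
have [j hj] := col_nz Pn.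
exists (P *m delta_mx j (0 : 'I_1)); split => //.
by rewrite sqrtC0 addr0 scale1r mulmxDl !mulmxA PP QP mul0mx addr0.
Qed.

Lemma mx_zero_of {C : numClosedFieldType} p q (B : 'M[C]_(p,q)) :
  (forall z : 'cV[C]_q, B *m z = 0) -> B = 0.
Proof.
move=> H; apply/matrixP => i j.
by have := congr1 (fun N : 'cV[C]_p => N i 0) (H (delta_mx j (0 : 'I_1))); rewrite -colE !mxE.
Qed.

Lemma key_pair {C : numClosedFieldType} (A : finType) M (R : A -> 'I_2 -> 'M[C]_M) (c : C) :
  (0 < M)%N -> (forall x, \sum_a R a x = 1%:M) -> (forall a x, orth_proj (R a x)) ->
  is_cG R c ->
  exists a b (u : 'cV[C]_M) kap,
    [/\ u != 0, (R a ord0 + R b ord_max) *m u = kap *: u, 1 + sqrtC c <= kap & 0 <= c].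
Proof.
move=> M0 HR1 Hp [ub lb].
have [a0 ha0] : exists a0, R a0 ord0 != 0.
  case: (pickP (fun a => R a ord0 != 0)) => [a ha|H]; first by exists a.
  have := HR1 ord0; rewrite big1; last by move=> a _; apply/eqP; move: (H a) => /= /negbFE.
  move/matrixP => /(_ (Ordinal M0) (Ordinal M0)); rewrite !mxE eqxx /= => /eqP.
  by rewrite eq_sym oner_eq0.
pose B (p : A * A) := R p.1 ord0 *m R p.2 ord_max.
pose Pr (p : A * A) (mu : C) := [/\ 0 <= mu, is_opnorm (B p) (sqrtC mu),
   forall z, quad (B p *m z) <= mu * quad z &
   exists v : 'cV[C]_M, v != 0 /\ adj (B p) *m B p *m v = mu *: v].
have HPr : forall p, exists x, x \is Num.real /\ Pr p x.
  move=> p; have [mu [mu0 op bd ev]] := opnorm_of (B p) M0.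
  by exists mu; split; [exact: ger0_real | split].
have [[a b] [m [[m0 opm bdm [v [vn Ev]]] rm Hall]]] := fin_max_rel (a0, a0) HPr.
have mc : m <= c.
  by rewrite -[m]sqrtCK; apply: ub; exists a, b, (sqrtC m).
have c0 : 0 <= c := le_trans m0 mc.
have rc : c \is Num.real := ger0_real c0.
have cm : c <= m.
  rewrite real_leNgt //; apply/negP => lmc.
  have [s [[a' [b' [r [op ->]]]] ms]] := lb m lmc.
  have [x [[x0 opx _ _] xm]] := Hall (a', b').
  have er : r = sqrtC x.
    apply: (lub_unique op opx); apply: ger0_real; last by rewrite sqrtC_ge0.
    exact: (opnorm_ge0 M0 op).
  by move: ms; rewrite er sqrtCK => /(lt_le_trans)/(_ xm); rewrite ltxx.
have [mz|mnz] := eqVneq m 0.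
  have cz : c = 0 by apply/eqP; rewrite eq_le c0 -mz cm.
  have [x [[x0 _ bdx _] xm]] := Hall (a0, a0).
  have xz : x = 0 by apply/eqP; rewrite eq_le x0 -mz xm.
  have Bz : B (a0, a0) = 0.
    apply: mx_zero_of => z; apply/eqP; rewrite -quad_eq0 eq_le quad_ge0 andbT.
    by have := bdx z; rewrite xz mul0r.
  have [w [wn Ew]] := proj_eig_zero (Hp a0 ord0) (Hp a0 ord_max) ha0 Bz.
  by exists a0, a0, w, (1 + sqrtC 0); split => //; rewrite cz.
have mpos : 0 < m by rewrite lt_def mnz m0.
have [w [wn Ew]] := proj_eig_pos (Hp a ord0) (Hp b ord_max) vn mpos Ev.
exists a, b, w, (1 + sqrtC m); split => //.
by rewrite lerD2l ler_sqrtC // nnegrE.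
Qed.


Unset Implicit Arguments. Set Strict Implicit.
Theorem mainTheorem6 (C : numClosedFieldType) (A : finType) (M : nat)
    (pi : 'I_2 -> C) (R : A -> 'I_2 -> 'M[C]_M) (c : C) :
  moe_game pi R ->
  (forall x, pi x = 2^-1) ->
  (forall a x, orth_proj (R a x)) ->
  is_cG R c ->
  forall n : nat, (0 < n)%N ->
    sup_le (uvalues (rep_pi pi n) (rep_R R n)) (qvalues (rep_pi pi n) (rep_R R n)) /\
    le_sup ((2^-1 + 2^-1 * sqrtC c) ^+ n) (uvalues (rep_pi pi n) (rep_R R n)).
Proof.
move=> [X0 A0 M0 [pi0 pis] HRp] Hpi Hp HcG n n0.
have rp0 : forall x, 0 <= rep_pi pi n x.
  by move=> x; rewrite /rep_pi; apply: prodr_ge0 => k _; rewrite Hpi invr_ge0 ler0n.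
split.
  apply: sup_le_gen => f; apply: psd_sum => // x.
  by apply: proj_psd; apply: rep_R_proj.
move=> y hy.
have HR1 : forall x, \sum_a R a x = 1%:M by move=> x; have [_ ->] := HRp x.
have [a [b [u [kap [un Eu kc c0]]]]] := key_pair M0 HR1 Hp HcG.
pose g (t : 'I_2) := if t == ord0 then a else b.
have l1 : lift ord0 (ord0 : 'I_1) = ord_max :> 'I_2 by apply: val_inj.
have TE : \sum_t pi t *: R (g t) t = 2^-1 *: (R a ord0 + R b ord_max).
  rewrite big_ord_recl big_ord1 !Hpi l1 /g /= scalerDr.
  by [].
set lam := 2^-1 * kap.
have Tu : (\sum_t pi t *: R (g t) t) *m u = lam *: u.
  by rewrite TE -scalemxAl Eu scalerA.
have Kw := Kf_eig n Tu.
set w := (\col_i _ : 'cV[C]_(#|{: {ffun 'I_n -> 'I_M}}|)) in Kw.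
have wn : w != 0 by apply: w_nz.
have M'0 : (0 < #|{: {ffun 'I_n -> 'I_M}}|)%N by rewrite card_ffun card_ord expn_gt0 M0.
set K := \sum_x rep_pi pi n x *: rep_R R n [ffun k => g (x k)] x in Kw.
have [mu [mu0 opm bd _]] := opnorm_of K M'0.
exists (sqrtC mu); split; first by exists (fun x : {ffun 'I_n -> 'I_2} => [ffun k => g (x k)]).
apply: (lt_le_trans hy).
have sc0 : 0 <= sqrtC c by rewrite sqrtC_ge0.
have kap0 : 0 <= kap by apply: le_trans kc; rewrite addr_ge0.
have lam0 : 0 <= lam by rewrite mulr_ge0 // invr_ge0 ler0n.
have ln0 : 0 <= lam ^+ n by rewrite exprn_ge0.
apply: (@le_trans _ _ (lam ^+ n)).
  apply: lerXn2r; rewrite ?nnegrE //.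
    by apply: addr_ge0; [|apply: mulr_ge0]; rewrite ?invr_ge0 ?ler0n.
  by rewrite /lam -{1}(mulr1 2^-1) -mulrDr ler_wpM2l // invr_ge0 ler0n.
have := bd w; rewrite Kw quadZ geC0_conj // -expr2 ler_pM2r ?quad_gt0 // => h.
by rewrite -(sqrCK ln0) ler_sqrtC // nnegrE exprn_ge0.
Qed.
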